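(* Let $\mathcal{G}$ be a causal diagram with action $X\in\mathbf{O}$ and latent reward $Y\in\mathbf{L}$ that is a descendant of $X$, let $\Pi$ be a policy space over $X$, and let $\mathbf{Z}=\mathrm{An}(Y)_{\mathcal{G}}\cap\mathrm{Pa}(\Pi)$. If $P(y)$ is imitable with respect to $\langle\mathcal{G},\Pi\rangle$, then $(Y\perp\!\!\!\perp X\mid\mathbf{Z})_{\mathcal{G}_{\underline{X}}}$.
   Context: A structural causal model (SCM) $M = \langle \mathbf{U}, \mathbf{V}, \mathcal{F}, P(\mathbf{u})\rangle$ has exogenous variables $\mathbf{U}$ drawn from $P(\mathbf{u})$, endogenous variables $\mathbf{V}$, and for each $V$ a function $V\leftarrow f_V(\mathrm{Pa}_V,U_V)$. A POSCM is $\langle M,\mathbf{O},\mathbf{L}\rangle$ with $\mathbf{O},\mathbf{L}$ a partition of $\mathbf{V}$ into observed and latent variables; $P(\mathbf{o})$ is the observational distribution. The causal diagram $\mathcal{G}$ has an arrow $V_j\to V_i$ when $V_j\in\mathrm{Pa}_{V_i}$ and a bidirected arrow $V_i\leftrightarrow V_j$ when $U_{V_i}\cap U_{V_j}\ne\emptyset$; $\mathcal{M}_{\langle\mathcal{G}\rangle}$ is the class of POSCMs with diagram $\mathcal{G}$. $\mathrm{An}(Y)_{\mathcal{G}}$ is the set of ancestors of $Y$ (via directed paths) including $Y$. $\mathcal{G}_{\overline{X}}$ (resp. $\mathcal{G}_{\underline{X}}$) is $\mathcal{G}$ with arrows into (resp. out of) $X$ removed; d-separation is the standard criterion with bidirected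 arrows acting as latent common causes. A policy space $\Pi$ is determined by covariates $\mathrm{Pa}(\Pi)\subseteq\mathbf{O}\setminus\mathrm{De}(X)_{\mathcal{G}_{\overline{X}}}$ and consists of all maps $\pi(x\mid\mathrm{pa}(\Pi))$ to distributions over $X$. $\mathrm{do}(\pi)$ replaces $f_X$ by drawing $X\sim\pi$: $P(\mathbf{v}\mid\mathrm{do}(\pi))=\sum_{\mathbf{u}}P(\mathbf{u})\prod_{V\ne X}P(v\mid\mathrm{pa}_V,u_V)\pi(x\mid\mathrm{pa}(\Pi))$. $P(y)$ is imitable w.r.t. $\langle\mathcal{G},\Pi\rangle$ if there is $\pi\in\Pi$ uniquely computable from $P(\mathbf{o})$ such that $P(y\mid\mathrm{do}(\pi);M)=P(y;M)$ for every $M\in\mathcal{M}_{\langle\mathcal{G}\rangle}$. *)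

(* Defs.v *)
From HB Require Import structures.
From mathcomp Require Import all_boot all_order all_algebra.
From mathcomp Require Import reals.
Set Implicit Arguments. Unset Strict Implicit. Unset Printing Implicit Defensive.
Import Order.TTheory GRing.Theory Num.Theory.
Local Open Scope ring_scope.

Section Graphs.
Variable n : nat.
(* A causal diagram on vertices 'I_n: dir j i means V_j -> V_i,
   bi i j means V_i <-> V_j. *)

Definition acyclic (dir : rel 'I_n) : Prop :=
  forall i j, dir i j -> ~~ connect dir j i.

(* G with arrows into X removed (G_{\overline X}) and out of X removed (G_{\underline X}) *)
Definition dir_over (dir : rel 'I_n) (X : 'I_n) : rel 'I_n :=
  fun a b => dir a b && (b != X).
Definition dir_under (dir : rel 'I_n) (X : 'I_n) : rel 'I_n :=
  fun a b => dir a b && (a != X).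

Definition An (dir : rel 'I_n) (Y : 'I_n) : {set 'I_n} := [set i | connect dir i Y].
Definition De (dir : rel 'I_n) (X : 'I_n) : {set 'I_n} := [set i | connect dir X i].

Inductive ekind := Fwd | Bwd | Bi .

Definition edge (dir bi : rel 'I_n) (k : ekind) (a b : 'I_n) : bool :=
  match k with Fwd => dir a b | Bwd => dir b a | Bi => bi a b end.

(* a path from a: sequence of steps (kind, next node) *)
Fixpoint is_path (dir bi : rel 'I_n) (a : 'I_n) (p : seq (ekind * 'I_n)) : bool :=
  match p with
  | [::] => true
  | (k, b) :: p' => edge dir bi k a b && is_path dir bi b p'
  end.

(* w is a collider when both adjacent edges have an arrowhead at w;
   k1 is the step arriving at w, k2 the step leaving w *)
Definition collider (k1 k2 : ekind) : bool :=
  match k1, k2 with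
  | Bwd, _ => false
  | _, Fwd => false
  | _, _ => true
  end.

Definition blocking (dir : rel 'I_n) (C : {set 'I_n}) (k1 : ekind) (w : 'I_n)
  (k2 : ekind) : bool :=
  if collider k1 k2 then ~~ [exists c in C, connect dir w c] else w \in C.

Fixpoint blocked_from (dir : rel 'I_n) (C : {set 'I_n}) (k1 : ekind) (w : 'I_n)
  (p : seq (ekind * 'I_n)) : bool :=
  match p with
  | [::] => false
  | (k2, b) :: p' => blocking dir C k1 w k2 || blocked_from dir C k2 b p'
  end.

(* some intermediate node of the path blocks it *)
Definition path_blocked (dir : rel 'I_n) (C : {set 'I_n}) (a : 'I_n)
  (p : seq (ekind * 'I_n)) : bool :=
  match p with
  | [::] => false
  | (k, b) :: p' => blocked_from dir C k b p'
  end.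

Definition dsep (dir bi : rel 'I_n) (A B C : {set 'I_n}) : Prop :=
  forall (a b : 'I_n) (p : seq (ekind * 'I_n)),
    a \in A -> b \in B -> is_path dir bi a p -> uniq (a :: map snd p) ->
    last a (map snd p) = b -> path_blocked dir C a p.

End Graphs.

Section SCM.
Variables (R : realType) (n m : nat) (T W : finType).
(* Endogenous variables 'I_n with values in T; exogenous variables 'I_m with values
   in W, mutually independent with marginals pu. *)
Record scm := SCM {
  pu : 'I_m -> W -> R;
  uset : 'I_n -> {set 'I_m};
  fv : 'I_n -> {ffun 'I_n -> T} -> {ffun 'I_m -> W} -> T
}.

Definition in_class (dir bi : rel 'I_n) (M : scm) : Prop :=
  [/\ (forall k w, 0 <= pu M k w),
      (forall k, \sum_(w : W) pu M k w = 1),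
      (forall i (v v' : {ffun 'I_n -> T}) (u u' : {ffun 'I_m -> W}),
          (forall j, dir j i -> v j = v' j) ->
          (forall k, k \in uset M i -> u k = u' k) ->
          fv M i v u = fv M i v' u')
    & (forall i j, i != j -> bi i j = (uset M i :&: uset M j != set0))].

Definition Pu (M : scm) (u : {ffun 'I_m -> W}) : R := \prod_(k < m) pu M k (u k).

Definition Pv (M : scm) (v : {ffun 'I_n -> T}) : R :=
  \sum_(u : {ffun 'I_m -> W}) Pu M u * \prod_(i < n) (v i == fv M i v u)%:R.

(* observational distribution P(o), as a function of the O-coordinates *)
Definition Po (O : {set 'I_n}) (M : scm) (o : {ffun 'I_n -> T}) : R :=
  \sum_(v : {ffun 'I_n -> T} | [forall i in O, v i == o i]) Pv M v.

Definition Py (M : scm) (Y : 'I_n) (y : T) : R :=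
  \sum_(v : {ffun 'I_n -> T} | v Y == y) Pv M v.

(* a policy pi(x | pa(Pi)); pi v x only depends on v through Pa(Pi) *)
Definition policy := {ffun 'I_n -> T} -> T -> R.

Definition in_policy_space (PaPi : {set 'I_n}) (pi : policy) : Prop :=
  [/\ (forall v v' : {ffun 'I_n -> T}, (forall i, i \in PaPi -> v i = v' i) ->
          forall x, pi v x = pi v' x),
      (forall (v : {ffun 'I_n -> T}) (x : T), 0 <= pi v x)
    & (forall v : {ffun 'I_n -> T}, \sum_(x : T) pi v x = 1)].

Definition Pv_do (M : scm) (X : 'I_n) (pi : policy) (v : {ffun 'I_n -> T}) : R :=
  \sum_(u : {ffun 'I_m -> W})
     Pu M u * (\prod_(i < n | i != X) (v i == fv M i v u)%:R) * pi v (v X).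

Definition Py_do (M : scm) (X : 'I_n) (pi : policy) (Y : 'I_n) (y : T) : R :=
  \sum_(v : {ffun 'I_n -> T} | v Y == y) Pv_do M X pi v.

End SCM.

(* P(y) is imitable w.r.t. <G, Pi>: there is a policy in Pi computed from P(o) alone
   (a map Phi from observational distributions to policies) that matches P(y) in
   every model of M_<G>.  The choice of Phi may depend on the value spaces. *)
Definition imitable (R : realType) (n : nat) (dir bi : rel 'I_n) (O : {set 'I_n})
  (X Y : 'I_n) (PaPi : {set 'I_n}) : Prop :=
  forall (T W : finType) (m : nat),
  exists Phi : ({ffun 'I_n -> T} -> R) -> policy R n T,
  forall M : scm R n m T W, in_class dir bi M ->
    in_policy_space PaPi (Phi (Po O M)) /\
    forall y : T, Py_do M X (Phi (Po O M)) Y y = Py M Y y.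

(* Main.v *)
Require Import Defs.
From HB Require Import structures.
From mathcomp Require Import all_boot all_order all_algebra.
From mathcomp Require Import reals.
Set Implicit Arguments. Unset Strict Implicit. Unset Printing Implicit Defensive.

Section Model.
Variables (n : nat) (dir bi : rel 'I_n) (X Y : 'I_n) (ps : seq 'I_n) (ks : seq ekind)
  (qs : 'I_n -> seq 'I_n).

Definition kk := size ks.
Definition node t := nth Y ps t.
Definition kind t := nth Bi ks t.
Definition Key := ('I_n + ('I_n * 'I_n))%type.
Definition key (c : Key) : 'I_#|{: Key}| := enum_rank c.
Definition priv i := key (inl i).
Definition pidx (a b : 'I_n) := key (inr (if a < b then (a, b) else (b, a))).
Definition UT := {ffun 'I_#|{: Key}| -> bool}.
Definition TT := (bool * bool * {ffun 'I_n -> bool})%type.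
Definition VT := {ffun 'I_n -> TT}.

Definition leftbit t (v : VT) (u : UT) : bool :=
  match kind t.-1 with
  | Fwd => (v (node t.-1)).1.1
  | Bwd => u (priv (node t))
  | Bi => u (pidx (node t.-1) (node t))
  end.
Definition rightbit t (v : VT) (u : UT) : bool :=
  match kind t with
  | Fwd => u (priv (node t))
  | Bwd => (v (node t.+1)).1.1
  | Bi => u (pidx (node t) (node t.+1))
  end.
Definition sbit t v u := ((0 < t) && leftbit t v u) (+) ((t < kk) && rightbit t v u).
Definition predc (j : 'I_n) w := nth Y (node j :: qs j) (index w (qs j)).
Definition colval (j : 'I_n) i (v : VT) u : bool :=
  if (0 < j <= kk) then
    (if i == node j then sbit j v u
     else if i \in qs j then (v (predc j i)).2 j else false)
  else false.
Definition outsum i (v : VT) : bool :=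
  \big[addb/false]_(j < n | 0 < j <= kk)
     (if i \in qs j then (v (predc j i)).2 j else false).
Definition fvm i (v : VT) (u : UT) : TT :=
  (u (priv i), (i == Y) && (sbit 0 v u (+) outsum i v), [ffun j => colval j i v u]).

Definition beta i (u : UT) : bool :=
  match kind i.-1 with
  | Fwd => u (priv (node i.-1))
  | Bwd => u (priv (node i))
  | Bi => u (pidx (node i.-1) (node i))
  end.
Definition sb t u := ((0 < t) && beta t u) (+) ((t < kk) && beta t.+1 u).

Lemma sbit_obs t (v : VT) (u : UT) :
  (forall i, (v i).1.1 = u (priv i)) -> sbit t v u = sb t u.
Proof.
move=> H; rewrite /sbit /sb /leftbit /rightbit /beta /=.
by case: (kind t.-1); case: (kind t); rewrite ?H.
Qed.

Lemma tele (b : nat -> bool) k :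
  \big[addb/false]_(0 <= t < k.+1) (((0 < t) && b t) (+) ((t < k) && b t.+1)) = false.
Proof.
rewrite big_split /= big_nat_recl // big_nat_recr //= ltnn andFb addbF.
rewrite (@eq_big_nat _ _ _ 0 k (fun i => (i < k) && b i.+1) (fun i => b i.+1)); last first.
  by move=> i /andP[_ ->].
by rewrite addbb.
Qed.

Lemma telescope (u : UT) : kk < n ->
  sb 0 u (+) \big[addb/false]_(j < n | 0 < j <= kk) sb j u = false.
Proof.
move=> kn.
have -> : \big[addb/false]_(j < n | 0 < j <= kk) sb j u =
          \big[addb/false]_(1 <= j < kk.+1) sb j u.
  rewrite -(big_mkord (fun j => 0 < j <= kk) (fun j => sb j u)).
  rewrite (big_nat_widen 1 (kk.+1) n) //.
  rewrite big_mkcond [RHS]big_mkcond (big_ltn (leq_ltn_trans (leq0n _) kn)) /=.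
  by apply: eq_big_nat => j /andP[j1 _]; rewrite j1.
by have := tele (fun t => beta t u) kk; rewrite big_ltn.
Qed.

Section Obs.
Hypothesis Hsize : size ps = kk.+1.
Hypothesis Huniq : uniq ps.
Hypothesis Hnode0 : node 0 = Y.
Hypothesis Hq : forall j : 'I_n, 0 < j <= kk ->
  [/\ path dir (node j) (qs j), last (node j) (qs j) = Y & uniq (node j :: qs j)].

Lemma node_inj i j : i <= kk -> j <= kk -> (node i == node j) = (i == j).
Proof. by move=> hi hj; rewrite /node nth_uniq // Hsize ltnS. Qed.

Lemma Yinqs (j : 'I_n) : 0 < j <= kk -> Y \in qs j.
Proof.
move=> hj; have [_ hl _] := Hq hj.
have := mem_last (node j) (qs j); rewrite hl inE => /orP[|//].
rewrite -Hnode0 node_inj //; last by case/andP: hj.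
by case/andP: hj => /lt0n_neq0; rewrite eq_sym => /negbTE ->.
Qed.

Lemma predc_mem (j : 'I_n) w : w \in qs j -> predc j w \in node j :: qs j.
Proof. by move=> hw; rewrite /predc mem_nth //= ltnS ltnW // index_mem. Qed.

Lemma fix_col (v : VT) u (j : 'I_n) : 0 < j <= kk -> (forall i, v i = fvm i v u) ->
  forall p, p <= size (qs j) -> (v (nth Y (node j :: qs j) p)).2 j = sb j u.
Proof.
move=> hj hv; have [hp hl hu] := Hq hj.
elim=> [|p IH] hp'.
  rewrite /= hv /fvm /= ffunE /colval hj eqxx; apply: sbit_obs => i.
  by rewrite hv.
rewrite /= hv /fvm /= ffunE /colval hj.
have hm : nth Y (qs j) p \in qs j by rewrite mem_nth.
have -> : (nth Y (qs j) p == node j) = false.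
  by apply/eqP => e; move: hu; rewrite /= -e hm.
rewrite hm /predc index_uniq //; last by case/andP: hu.
by rewrite IH // ltnW.
Qed.

Lemma fix_out (v : VT) u : kk < n -> (forall i, v i = fvm i v u) -> (v Y).1.2 = false.
Proof.
move=> kn hv; rewrite hv /fvm /= eqxx /=.
have h1 : forall i, (v i).1.1 = u (priv i) by move=> i; rewrite hv.
rewrite (sbit_obs _ h1).
rewrite /outsum (eq_bigr (fun j : 'I_n => sb j u)); first by apply: telescope.
move=> j hj; rewrite Yinqs //.
have [_ _ hu] := Hq hj.
by rewrite /predc (fix_col hj hv) // ltnW // index_mem Yinqs.
Qed.

Definition vsol (u : UT) : VT := [ffun i => (u (priv i), false,
  [ffun j : 'I_n => (0 < j <= kk) && ((i == node j) || (i \in qs j)) && sb j u])].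

Lemma vsol_fix u : kk < n -> forall i, vsol u i = fvm i (vsol u) u.
Proof.
move=> kn i; rewrite /fvm.
have h1 : forall i, (vsol u i).1.1 = u (priv i) by move=> ?; rewrite ffunE.
have hc : forall (j : 'I_n) w, 0 < j <= kk -> w \in node j :: qs j -> (vsol u w).2 j = sb j u.
  move=> j w hj; rewrite ffunE /= ffunE hj inE /= => ->; by [].
rewrite ffunE; congr (_, _, _).
  case: eqP => [->|//] /=.
  rewrite (sbit_obs _ h1) /outsum (eq_bigr (fun j : 'I_n => sb j u)).
    by rewrite telescope.
  by move=> j hj; rewrite Yinqs // hc // predc_mem // Yinqs.
apply/ffunP => j; rewrite !ffunE /colval.
case hj: (0 < j <= kk) => //=.
case: eqP => [->|ne] /=; first by rewrite (sbit_obs _ h1).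
by case hi: (i \in qs j) => //; rewrite hc // predc_mem.
Qed.
End Obs.

Definition tailat t (w : 'I_n) : bool :=
  match kind t with Fwd => w == node t | Bwd => w == node t.+1 | Bi => false end.
Definition tail w := [exists t : 'I_n, (t < kk) && tailat t w].
Definition genat t (c : 'I_#|{: Key}|) : bool :=
  match kind t with
  | Fwd => c == priv (node t)
  | Bwd => c == priv (node t.+1)
  | Bi => c == pidx (node t) (node t.+1)
  end.
Definition gen c := [exists t : 'I_n, (t < kk) && genat t c].
Definition phi (u : UT) : UT := [ffun c => u c (+) gen c].
Definition flipT i (x : TT) : TT := (x.1.1 (+) tail i, x.1.2 (+) (i == Y), x.2).
Definition flipv (v : VT) : VT := [ffun i => flipT i (v i)].

Lemma flipTK i : involutive (flipT i).
Proof. by case=> [[a b] c]; rewrite /flipT /= !addbK. Qed.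
Lemma phiK : involutive phi.
Proof. by move=> u; apply/ffunP => c; rewrite !ffunE addbK. Qed.
Lemma flipvK : involutive flipv.
Proof. by move=> v; apply/ffunP => i; rewrite !ffunE flipTK. Qed.

Lemma priv_inj : injective priv.
Proof. by move=> a b /enum_rank_inj []. Qed.
Lemma priv_pidx a b c : (priv a == pidx b c) = false.
Proof. by apply/negbTE/eqP => /enum_rank_inj. Qed.

Lemma gen_priv w : gen (priv w) = tail w.
Proof.
apply: eq_existsb => t; congr (_ && _); rewrite /genat /tailat.
by case: (kind t); rewrite ?priv_pidx // (inj_eq priv_inj).
Qed.

Section Flip.
Hypothesis kn : kk < n.

Lemma tail_at t w : t < kk -> tailat t w -> tail w.
Proof. by move=> ht h; apply/existsP; exists (Ordinal (ltn_trans ht kn)); rewrite ht. Qed.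
Lemma gen_at t c : t < kk -> genat t c -> gen c.
Proof. by move=> ht h; apply/existsP; exists (Ordinal (ltn_trans ht kn)); rewrite ht. Qed.

Lemma leftbit_flip t v u : 0 < t <= kk -> leftbit t (flipv v) (phi u) = ~~ leftbit t v u.
Proof.
case/andP=> t0 tk; have ht : t.-1 < kk by rewrite prednK.
rewrite /leftbit; case hk: (kind t.-1); rewrite !ffunE /= ?addbT //.
- by rewrite (@tail_at t.-1) ?addbT // /tailat hk.
- by rewrite gen_priv (@tail_at t.-1) ?addbT // /tailat hk prednK.
- by rewrite (@gen_at t.-1) ?addbT // /genat hk prednK.
Qed.

Lemma rightbit_flip t v u : t < kk -> rightbit t (flipv v) (phi u) = ~~ rightbit t v u.
Proof.
move=> ht; rewrite /rightbit; case hk: (kind t); rewrite !ffunE /= ?addbT //.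
- by rewrite gen_priv (@tail_at t) ?addbT // /tailat hk.
- by rewrite (@tail_at t) ?addbT // /tailat hk.
- by rewrite (@gen_at t) ?addbT // /genat hk.
Qed.

Lemma sbit_flip t v u : t <= kk ->
  sbit t (flipv v) (phi u) = sbit t v u (+) (0 < t) (+) (t < kk).
Proof.
move=> tk; rewrite /sbit.
case: (posnP t) => [->|t0] /=.
  case: (ltnP 0 kk) => h /=; rewrite ?rightbit_flip //;
  by case: rightbit.
rewrite leftbit_flip ?t0 //.
case: (ltnP t kk) => h /=; rewrite ?rightbit_flip //;
  by case: leftbit; case: rightbit.
Qed.

Hypothesis k0 : 0 < kk.
Hypothesis HkX : node kk = X.

Lemma outsum_flip i v : outsum i (flipv v) = outsum i v.
Proof. by apply: eq_bigr => j _; rewrite ffunE. Qed.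

Lemma fvm_flip i v u : i != X -> fvm i (flipv v) (phi u) = flipT i (fvm i v u).
Proof.
move=> iX; rewrite /fvm /flipT /=; congr (_, _, _).
- by rewrite ffunE gen_priv.
- rewrite outsum_flip sbit_flip // k0 /=.
  by case: (i == Y); [case: (sbit 0 v u); case: (outsum i v)|].
apply/ffunP => j; rewrite !ffunE /colval.
case hj: (0 < j <= kk); last by [].
case: eqP => [ij|_]; last first.
  by case: (i \in qs j); rewrite // ffunE.
case/andP: hj => j0 jk'.
have jk : j < kk.
  rewrite ltn_neqAle jk' andbT; apply/eqP => e.
  by move: iX; rewrite ij e HkX eqxx.
rewrite sbit_flip // j0 jk.
by case: (sbit j v u).
Qed.
End Flip.

Definition memb (i : 'I_n) (c : Key) : bool :=
  match c with
  | inl j => j == i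
  | inr (a, b) => (a < b) && bi a b && ((a == i) || (b == i))
  end.
Definition uset (i : 'I_n) : {set 'I_#|{: Key}|} := [set c | memb i (enum_val c)].

Lemma key_uset i c : (key c \in uset i) = memb i c.
Proof. by rewrite inE /key enum_rankK. Qed.

Section Class.
Hypothesis Hsize : size ps = kk.+1.
Hypothesis Huniq : uniq ps.
Hypothesis Hnode0 : node 0 = Y.
Hypothesis Hq : forall j : 'I_n, 0 < j <= kk ->
  [/\ path dir (node j) (qs j), last (node j) (qs j) = Y & uniq (node j :: qs j)].
Hypothesis Hedge : forall t, t < kk -> edge dir bi (kind t) (node t) (node t.+1).
Hypothesis Hbis : forall i j, bi i j = bi j i.
Hypothesis Hbirr : forall i, ~~ bi i i.

Lemma pidx_in i a b : bi a b -> a != b -> (a == i) || (b == i) -> pidx a b \in uset i.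
Proof.
move=> hab ne hi; rewrite /pidx key_uset /=.
case: (ltngtP a b) => [lt|gt|eq]; rewrite /= ?lt ?gt ?hab //=.
- by rewrite Hbis hab orbC.
- by move/eqP: ne; move/val_inj: eq.
Qed.

Lemma priv_in i : priv i \in uset i.
Proof. by rewrite /priv key_uset /= eqxx. Qed.

Lemma node_neq t : t < kk -> node t != node t.+1.
Proof. by move=> ht; rewrite (node_inj Hsize Huniq (ltnW ht) ht) eqn_leq ltnn andbF. Qed.

Lemma sbit_congr t (v v' : VT) (u u' : UT) : t <= kk ->
  (forall j, dir j (node t) -> v j = v' j) ->
  (forall c, c \in uset (node t) -> u c = u' c) -> sbit t v u = sbit t v' u'.
Proof.
move=> tk hv hu; rewrite /sbit; congr (_ (+) _).
  case: (posnP t) => [->//|t0] /=.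
  have ht : t.-1 < kk by rewrite prednK.
  have he := Hedge ht; have hn := node_neq ht; rewrite prednK // in he hn.
  rewrite /leftbit; move: he; case: (kind t.-1) => /= he.
  - by rewrite hv.
  - by rewrite hu // priv_in.
  - by rewrite hu // pidx_in // eqxx orbT.
case: (ltnP t kk) => ht //=.
have he := Hedge ht; have hn := node_neq ht.
rewrite /rightbit; move: he; case: (kind t) => /= he.
- by rewrite hu // priv_in.
- by rewrite hv.
- by rewrite hu // pidx_in // eqxx.
Qed.

Lemma pred_dir (j : 'I_n) i : 0 < j <= kk -> i \in qs j -> dir (predc j i) i.
Proof.
move=> hj hi; have [hp _ _] := Hq hj.
have := (pathP Y hp) (index i (qs j)); rewrite index_mem hi nth_index //.
by move=> /(_ isT).
Qed.

Lemma fvm_congr i (v v' : VT) (u u' : UT) :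
  (forall j, dir j i -> v j = v' j) ->
  (forall c, c \in uset i -> u c = u' c) -> fvm i v u = fvm i v' u'.
Proof.
move=> hv hu; rewrite /fvm; congr (_, _, _).
- by rewrite hu // priv_in.
- case: eqP => [iY|//] /=; congr (_ (+) _).
    by apply: sbit_congr; rewrite ?Hnode0 -?iY.
  apply: eq_bigr => j hj; case hi: (i \in qs j) => //.
  by rewrite hv // pred_dir.
apply/ffunP => j; rewrite !ffunE /colval.
case hj: (0 < j <= kk); last by [].
case: eqP => [ij|_].
  by apply: sbit_congr; rewrite -?ij //; case/andP: hj.
case hi: (i \in qs j); last by [].
by rewrite hv // pred_dir.
Qed.

Lemma uset_bi i j : i != j -> bi i j = (uset i :&: uset j != set0).
Proof.
move=> ij; apply/idP/idP => [hb|].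
  apply/set0Pn; exists (pidx i j); rewrite inE.
  by rewrite !pidx_in // eqxx ?orbT.
case/set0Pn => c; rewrite !inE.
case: (enum_val c) => [l|[a b]] /=.
  by case/andP => /eqP li /eqP lj; move: ij; rewrite -li -lj eqxx.
case/andP => /andP[/andP[_ hab] hi] /andP[_ hj].
case/orP: hi => /eqP ai; case/orP: hj => /eqP bj.
- by move: ij; rewrite -ai -bj eqxx.
- by rewrite -ai -bj.
- by rewrite -ai -bj Hbis.
- by move: ij; rewrite -ai -bj eqxx.
Qed.
End Class.

Definition Mdl (R : realType) : scm R n #|{: Key}| TT bool :=
  @SCM R n #|{: Key}| TT bool (fun _ _ => 2^-1)%R uset fvm.

Lemma big_byY (R : realType) (P : pred TT) (G : VT -> R) :
  (\sum_(y | P y) \sum_(v : VT | v Y == y) G v = \sum_(v : VT | P (v Y)) G v)%R.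
Proof.
rewrite [RHS](partition_big (fun v : VT => v Y) P) //=.
apply: eq_bigr => y Py; apply: eq_bigl => v.
by case: eqP => [->|_]; rewrite ?Py ?andbF.
Qed.

Section Prob.
Variable R : realType.
Hypothesis Hsize : size ps = kk.+1.
Hypothesis Huniq : uniq ps.
Hypothesis Hnode0 : node 0 = Y.
Hypothesis HkX : node kk = X.
Hypothesis kn : kk < n.
Hypothesis k0 : 0 < kk.
Hypothesis Hq : forall j : 'I_n, 0 < j <= kk ->
  [/\ path dir (node j) (qs j), last (node j) (qs j) = Y & uniq (node j :: qs j)].
Variable PaPi : {set 'I_n}.
Hypothesis HPa : forall q, q \in PaPi -> ~~ tail q /\ q != Y.
Hypothesis HXt : ~~ tail X.
Hypothesis HXY : X != Y.
Variable pi : policy R n TT.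
Hypothesis Hpi : in_policy_space PaPi pi.

Import Order.TTheory GRing.Theory Num.Theory.
Local Open Scope ring_scope.

Lemma Pu_pos u : 0 < Pu (Mdl R) u.
Proof. by apply: prodr_gt0 => k _; rewrite /= invr_gt0 ltr0n. Qed.

Lemma Py_zero (y : TT) : y.1.2 -> Py (Mdl R) Y y = 0.
Proof.
move=> hy; apply: big1 => v /eqP vy; apply: big1 => u _.
case: (boolP [forall i, v i == fvm i v u]) => [/forallP h|].
  have := fix_out Hsize Huniq Hnode0 Hq kn (fun i => eqP (h i)).
  by rewrite vy hy.
rewrite negb_forall => /existsP[i hi].
by rewrite (bigD1 i) //= (negbTE hi) mul0r mulr0.
Qed.

Lemma sumPy_pos : 0 < \sum_y Py (Mdl R) Y y.
Proof.
rewrite (big_byY (fun _ => true)) /=.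
set u0 : UT := [ffun _ => false].
rewrite (bigD1 (vsol u0)) //=; apply: ltr_wpDr; first by apply: sumr_ge0 => v _;
  apply: sumr_ge0 => u _; apply: mulr_ge0; [exact: ltW (Pu_pos u)|];
  apply: prodr_ge0 => i _; exact: ler0n.
rewrite /Pv (bigD1 u0) //=; apply: ltr_wpDr.
  apply: sumr_ge0 => u _; apply: mulr_ge0; [exact: ltW (Pu_pos u)|].
  by apply: prodr_ge0 => i _; exact: ler0n.
rewrite big1 ?mulr1 ?Pu_pos // => i _.
by rewrite -(vsol_fix Hsize Huniq Hnode0 Hq u0 kn i) eqxx.
Qed.

Definition FF (u : UT) (v : VT) : R :=
  Pu (Mdl R) u * (\prod_(i < n | i != X) (v i == fvm i v u)%:R) * pi v (v X).

Lemma flipT_id i x : ~~ tail i -> i != Y -> flipT i x = x.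
Proof. by move=> /negbTE t /negbTE e; case: x => [[a b] c]; rewrite /flipT /= t e !addbF. Qed.

Lemma FF_flip u v : FF (phi u) (flipv v) = FF u v.
Proof.
rewrite /FF; congr (_ * _ * _).
  apply: eq_bigr => i iX; rewrite ffunE (fvm_flip kn k0 HkX) //.
  by rewrite (inj_eq (can_inj (flipTK i))).
have -> : flipv v X = v X by rewrite ffunE flipT_id.
case: Hpi => hc _ _; apply: hc => i hi.
by have [t e] := HPa hi; rewrite ffunE flipT_id.
Qed.

Lemma not_imit : ~ (forall y, Py_do (Mdl R) X pi Y y = Py (Mdl R) Y y).
Proof.
move=> Hy.
have hA : \sum_(v : VT | (v Y).1.2) \sum_u FF u v = 0.
  rewrite -(big_byY (fun y : TT => y.1.2)).
  transitivity (\sum_(y : TT | y.1.2) Py_do (Mdl R) X pi Y y); first by [].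
  rewrite (eq_bigr _ (fun y _ => Hy y)); apply: big1 => y; exact: Py_zero.
have hB : \sum_(v : VT | ~~ (v Y).1.2) \sum_u FF u v =
          \sum_(v : VT | (v Y).1.2) \sum_u FF u v.
  rewrite (reindex_inj (can_inj flipvK)) /=.
  apply: eq_big => v; first by rewrite ffunE /flipT /= eqxx addbT negbK.
  move=> _; rewrite (reindex_inj (can_inj phiK)) /=.
  by apply: eq_bigr => u _; rewrite FF_flip.
have := sumPy_pos.
have -> : \sum_y Py (Mdl R) Y y = \sum_y Py_do (Mdl R) X pi Y y.
  by apply: eq_bigr => y _; rewrite Hy.
rewrite (big_byY (fun _ => true)) /=.
rewrite (bigID (fun v : VT => (v Y).1.2)) /=.
rewrite /Pv_do.
have e : forall v : VT, \sum_u Pu (Mdl R) u * (\prod_(i < n | i != X) (v i == fv (Mdl R) i v u)%:R) * pi v (v X) = \sum_u FF u v.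
  by [].
rewrite (eq_bigr _ (fun v _ => e v)) [X in _ + X](eq_bigr _ (fun v _ => e v)).
by rewrite hB hA addr0 ltxx.
Qed.
End Prob.
End Model.

Lemma is_path_nth n (d : rel 'I_n) bi (dflt : 'I_n) a p : is_path d bi a p ->
  forall t, t < size p ->
  edge d bi (nth Bi (map fst p) t) (nth dflt (a :: map snd p) t) (nth dflt (map snd p) t).
Proof.
elim: p a => [|[k b] p IH] a //= /andP[he hp] [|t] //= ht.
exact: IH.
Qed.

Lemma unblocked_nth n (d : rel 'I_n) C (dflt : 'I_n) k1 w p :
  ~~ blocked_from d C k1 w p -> forall t, t < size p ->
  ~~ blocking d C (nth Bi (k1 :: map fst p) t) (nth dflt (w :: map snd p) t)
     (nth Bi (map fst p) t).
Proof.
elim: p k1 w => [|[k2 b] p IH] k1 w //=; rewrite negb_or => /andP[h1 h2] [|t] //= ht.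
exact: IH.
Qed.

Import Order.TTheory GRing.Theory Num.Theory.
Unset Implicit Arguments.

Theorem lemma5 (R : realType) (n : nat) (dir bi : rel 'I_n)
  (O : {set 'I_n}) (X Y : 'I_n) (PaPi : {set 'I_n}) :
  acyclic dir ->
  (forall i j, bi i j = bi j i) -> (forall i, ~~ bi i i) ->
  X \in O -> Y \notin O ->
  connect dir X Y ->
  PaPi \subset O :\: De (dir_over dir X) X ->
  imitable R dir bi O X Y PaPi ->
  dsep (dir_under dir X) bi [set Y] [set X] (An dir Y :&: PaPi).
Proof.
move=> Hac Hbis Hbirr XO YO XY HPa Himit a b p.
rewrite !inE => /eqP -> /eqP -> Hp Hu Hl.
apply/negPn/negP => Hnb.
set C := An dir Y :&: PaPi.
have YX : Y != X by apply: contraNneq YO => ->.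
have Hnb' : forall t, 0 < t < size p ->
    ~~ blocking (dir_under dir X) C (nth Bi (map fst p) t.-1) (nth Y (Y :: map snd p) t)
       (nth Bi (map fst p) t).
  move: Hnb; case: p {Hp Hu Hl} => [|[c0 b0] p'] //= Hnb [|t] //=.
  by rewrite ltnS => /(unblocked_nth Y Hnb).
have k0' : 0 < size p.
  by move: Hl YX; case: p {Hp Hu Hnb Hnb'} => [|//] /= ->; rewrite eqxx.
pose ps := Y :: map snd p; pose ks := map fst p.
have Hsize : size ps = (kk ks).+1 by rewrite /kk /= !size_map.
have k0 : 0 < kk ks by rewrite /kk size_map.
have HkX : node Y ps (kk ks) = X.
  by rewrite /node /kk /ks size_map -(size_map snd p) -Hl (nth_last Y (Y :: map snd p)).
have kn : kk ks < n.
  have := max_card (mem ps); rewrite card_ord (card_uniqP Hu) Hsize.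
  by [].
have Hnode0 : node Y ps 0 = Y by [].
have Hedge' : forall t, t < kk ks ->
    edge (dir_under dir X) bi (kind ks t) (node Y ps t) (node Y ps t.+1).
  move=> t ht; rewrite /kk size_map in ht.
  exact: (is_path_nth Y Hp ht).
have Hedge : forall t, t < kk ks -> edge dir bi (kind ks t) (node Y ps t) (node Y ps t.+1).
  move=> t ht; have := Hedge' t ht.
  by case: (kind ks t) => //= /andP[].
have {}Hnb' : forall t, 0 < t < kk ks ->
    ~~ blocking (dir_under dir X) C (kind ks t.-1) (node Y ps t) (kind ks t).
  by move=> t; rewrite /kk size_map; apply: Hnb'.
have Hcol : forall t, 0 < t < kk ks -> collider (kind ks t.-1) (kind ks t) ->
    connect dir (node Y ps t) Y.
  move=> t ht hc; have := Hnb' t ht; rewrite /blocking hc negbK => /existsP[c /andP[cC hc']].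
  move: cC; rewrite /C !inE => /andP[cY _].
  apply: connect_trans _ cY; apply: connect_sub hc' => x y /andP[hxy _].
  exact: connect1.
have HL : forall t, t < kk ks -> kind ks t = Bwd -> connect dir (node Y ps t) Y.
  elim=> [|t IH] ht hk; first by rewrite Hnode0 connect0.
  case hc: (collider (kind ks t) (kind ks t.+1)); first by apply: Hcol; rewrite ?ht.
  have hkt : kind ks t = Bwd by move: hc; rewrite hk; case: (kind ks t).
  apply: connect_trans (IH (ltnW ht) hkt); apply: connect1.
  by have := Hedge t (ltnW ht); rewrite hkt.
have HR : forall d t, t.+1 + d = kk ks -> kind ks t = Fwd -> connect dir (node Y ps t.+1) Y.
  elim=> [|d IH] t htd hk.
    by rewrite addn0 in htd; rewrite htd HkX.
  have ht1 : t.+1 < kk ks by rewrite -htd addnS ltnS leq_addr.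
  case hc: (collider (kind ks t) (kind ks t.+1)); first by apply: Hcol; rewrite ?ht1.
  have hk1 : kind ks t.+1 = Fwd by move: hc; rewrite hk; case: (kind ks t.+1).
  apply: connect_trans (IH t.+1 _ hk1); last by rewrite addSnnS.
  by apply: connect1; have := Hedge _ ht1; rewrite hk1.
have Hanc : forall t, 0 < t < kk ks -> connect dir (node Y ps t) Y.
  move=> t ht; case hc: (collider (kind ks t.-1) (kind ks t)); first exact: Hcol.
  case/andP: ht => t0 tk.
  have viaL : kind ks t.-1 = Bwd -> connect dir (node Y ps t) Y.
    move=> hk; have ht' : t.-1 < kk ks by rewrite prednK // ltnW.
    apply: connect_trans (HL _ ht' hk); apply: connect1.
    by have := Hedge _ ht'; rewrite hk prednK.
  have viaR : kind ks t = Fwd -> connect dir (node Y ps t) Y.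
    move=> hk; apply: connect_trans (HR (kk ks - t.+1) t _ hk); last by rewrite subnKC.
    by apply: connect1; have := Hedge _ tk; rewrite hk.
  move: hc; case hk1: (kind ks t.-1); case hk2: (kind ks t) => //= _;
    by [apply: viaL | apply: viaR].
have HPaq : forall q, q \in PaPi -> ~~ tail Y ps ks q /\ q != Y.
  move=> q hq; have := subsetP HPa q hq; rewrite !inE => /andP[hDe hO].
  split; last by apply: contraNneq YO => <-.
  apply/existsP => -[t /andP[ht]]; rewrite /tailat; case hk: (kind ks t) => // /eqP eq.
    case: (posnP t) => [t0|t0].
      by move: YO; rewrite -Hnode0 -t0 -eq hO.
    have hnc : collider (kind ks t.-1) Fwd = false by case: (kind ks t.-1).
    have := Hnb' t; rewrite t0 ht /blocking hk hnc /C !inE -eq hq andbT.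
    by rewrite andbT eq Hanc ?t0 ?ht // => /(_ isT).
  case: (ltnP t.+1 (kk ks)) => h.
    have := Hnb' t.+1; rewrite h -eq /blocking /= hk /C !inE hq andbT.
    by rewrite eq Hanc ?h // => /(_ isT).
  have e : t.+1 = kk ks by apply/eqP; rewrite eqn_leq h ht.
  by move: hDe; rewrite eq e HkX connect0.
have HXt : ~~ tail Y ps ks X.
  apply/existsP => -[t /andP[ht]]; rewrite /tailat; case hk: (kind ks t) => // /eqP eq.
    move: eq => /eqP; rewrite -HkX (node_inj Y Hsize Hu) // ?(ltnW ht) // => /eqP e.
    by move: ht; rewrite e ltnn.
  by have := Hedge' t ht; rewrite hk -eq /edge /dir_under eqxx andbF.
have [qs Hq] : exists qs : 'I_n -> seq 'I_n, forall j : 'I_n, 0 < j <= kk ks ->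
    [/\ path dir (node Y ps j) (qs j), last (node Y ps j) (qs j) = Y
      & uniq (node Y ps j :: qs j)].
  suff H : forall j : 'I_n, exists q : seq 'I_n, 0 < j <= kk ks ->
      [/\ path dir (node Y ps j) q, last (node Y ps j) q = Y & uniq (node Y ps j :: q)].
    by have [f hf] := fin_all_exists H; exists f.
  move=> j.
  case hj: (0 < j <= kk ks); last by exists [::].
  have hc : connect dir (node Y ps j) Y.
    case/andP: hj => j0; rewrite leq_eqVlt => /orP[/eqP ->|jk]; first by rewrite HkX.
    by apply: Hanc; rewrite j0.
  case/connectP: hc => q0 hq0 hl0.
  move: hl0; case: (shortenP hq0) => q' h1 h2 _ hl0.
  by exists q' => _; split.
have HM : in_class dir bi (Mdl bi Y ps ks qs R).
  split.
  - by move=> k w; rewrite /= invr_ge0 ler0n.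
  - by move=> k; rewrite /= big_bool /= -div1r -splitr.
  - by move=> i v v' u u' hv hu; apply: (fvm_congr Hsize Hu Hnode0 Hq Hedge Hbis).
  - by move=> i j ij; rewrite /= (uset_bi Hbis).
have [Phi HPhi] := Himit (TT n) bool #|{: Key n}|.
have [Hpol Hy] := HPhi _ HM.
apply: (not_imit Hsize Hu Hnode0 HkX kn k0 Hq HPaq HXt _ Hpol Hy).
by rewrite eq_sym.
Qed.
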